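(* Let $1<q<\infty$, $\alpha,\beta\in\mathbb R$, and let $f\in\mathbb W_q^{\alpha,\beta}$ be nonnegative on $[-1,1]$. Then, for every $\delta>0$, \[ \omega_\varphi^1(f,\delta)_{w_{\alpha,\beta},q}\le c\,\omega_\varphi^1(f^q,\delta)_{w_{q\alpha,q\beta},1}^{1/q}, \] with $c$ independent of $f$ and $\delta$.
   Context: For $x\in[-1,1]$, $\varphi(x)=\sqrt{1-x^2}$, $w_{\alpha,\beta}(x)=(1+x)^\alpha(1-x)^\beta$. $\|g\|_{L_q(S)}$ is the $L_q$ norm over $S$; $\mathbb W_q^{\alpha,\beta}=\{f:\|w_{\alpha,\beta}f\|_{L_q[-1,1]}<\infty\}$. $\Delta_h^1(f,x)=f(x+h/2)-f(x-h/2)$ if $x\pm h/2\in[-1,1]$, else $0$; $\overrightarrow\Delta_h^1(f,x)=\Delta_h^1(f,x+h/2)$, $\overleftarrow\Delta_h^1(f,x)=\Delta_h^1(f,x-h/2)$. For a weight $w$ and $1\le q\le\infty$: $\Omega_\varphi^1(f,\delta)_{w,q}=\sup_{0<h\le\delta}\|w(x)\Delta^1_{h\varphi(x)}(f,x)\|_{L_q[-1+2h^2,1-2h^2]}$, $\overrightarrow\Omega_\varphi^1(f,\delta)_{w,q}=\sup_{0<h\le2\delta^2}\|w\overrightarrow\Delta_h^1(f,\cdot)\|_{L_q[-1,-1+2\delta^2]}$, $\overleftarrow\Omega_\varphi^1(f,\delta)_{w,q}=\sup_{0<h\le2\delta^2}\|w\overleftarrow\Delta_h^1(f,\cdot)\|_{L_q[1-2\delta^2,1]}$,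 and $\omega_\varphi^1=\Omega_\varphi^1+\overrightarrow\Omega_\varphi^1+\overleftarrow\Omega_\varphi^1$. *)

(* Defs.v *)
From HB Require Import structures.
From mathcomp Require Import all_boot all_order all_algebra.
From mathcomp Require Import all_classical all_reals all_analysis.
Set Implicit Arguments. Unset Strict Implicit. Unset Printing Implicit Defensive.
Import Order.TTheory GRing.Theory Num.Theory.
Local Open Scope classical_set_scope.
Local Open Scope ring_scope.

Section Defs.
Variable R : realType.

Definition phi (x : R) : R := Num.sqrt (1 - x ^+ 2).

Definition wab (a b : R) (x : R) : R := powR (1 + x) a * powR (1 - x) b.

Definition Delta1 (f : R -> R) (h x : R) : R :=
  if (-1 <= x - h / 2) && (x + h / 2 <= 1) then f (x + h / 2) - f (x - h / 2)
  else 0.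
Definition fDelta1 (f : R -> R) (h x : R) : R := Delta1 f h (x + h / 2).
Definition bDelta1 (f : R -> R) (h x : R) : R := Delta1 f h (x - h / 2).

Definition Lnorm_on (p : R) (S : set R) (g : R -> R) : \bar R :=
  ((\int[@lebesgue_measure R]_(x in S) ((powR `|g x| p)%:E)) `^ p^-1)%E.

Definition Omega_phi (f : R -> R) (delta : R) (w : R -> R) (p : R) : \bar R :=
  ereal_sup [set y | exists h : R, [/\ 0 < h, h <= delta &
    y = Lnorm_on p `[-1 + 2 * h ^+ 2, 1 - 2 * h ^+ 2]
          (fun x => w x * Delta1 f (h * phi x) x)]].

Definition fOmega_phi (f : R -> R) (delta : R) (w : R -> R) (p : R) : \bar R :=
  ereal_sup [set y | exists h : R, [/\ 0 < h, h <= 2 * delta ^+ 2 &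
    y = Lnorm_on p `[-1, -1 + 2 * delta ^+ 2] (fun x => w x * fDelta1 f h x)]].

Definition bOmega_phi (f : R -> R) (delta : R) (w : R -> R) (p : R) : \bar R :=
  ereal_sup [set y | exists h : R, [/\ 0 < h, h <= 2 * delta ^+ 2 &
    y = Lnorm_on p `[1 - 2 * delta ^+ 2, 1] (fun x => w x * bDelta1 f h x)]].

Definition omega_phi (f : R -> R) (delta : R) (w : R -> R) (p : R) : \bar R :=
  (Omega_phi f delta w p + fOmega_phi f delta w p + bOmega_phi f delta w p)%E.

End Defs.

(* Main.v *)
Require Import Defs.
From HB Require Import structures.
From mathcomp Require Import all_boot all_order all_algebra.
From mathcomp Require Import all_classical all_reals all_analysis.
From mathcomp Require Import lra.
Import Order.TTheory GRing.Theory Num.Theory.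
Local Open Scope classical_set_scope.
Local Open Scope ring_scope.
Lemma powR_split (R : realType) (q u : R) : 1 <= q -> 0 <= u ->
  powR u q = powR u (q - 1) * u.
Proof.
move=> q1 u0.
have -> : q = (q - 1) + 1 by rewrite subrK.
rewrite powRD ?powRr1 // ?subrK //.
by apply/implyP => /eqP q0; move: q1; rewrite q0 ler10.
Qed.

Lemma key1 (R : realType) (q u v : R) : 1 <= q -> 0 <= v -> v <= u ->
  powR (u - v) q + powR v q <= powR u q.
Proof.
move=> q1 v0 vu.
have u0 : 0 <= u by apply: le_trans vu.
have uv0 : 0 <= u - v by rewrite subr_ge0.
have q10 : 0 <= q - 1 by rewrite subr_ge0.
rewrite !(@powR_split _ q _ q1) //.
have -> : powR u (q - 1) * u = powR u (q - 1) * (u - v) + powR u (q - 1) * v.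
  by rewrite -mulrDr subrK.
apply: lerD; apply: ler_wpM2r => //; apply: ge0_ler_powR => //; rewrite ?nnegrE //.
by rewrite lerBlDr lerDl.
Qed.

Lemma key2 (R : realType) (q u v : R) : 1 <= q -> 0 <= u -> 0 <= v ->
  powR `|u - v| q <= `|powR u q - powR v q|.
Proof.
move=> q1 u0 v0.
wlog vu : u v u0 v0 / v <= u.
  move=> H; case: (leP v u) => [/H|/ltW uv]; first by apply.
  by rewrite distrC [X in _ <= X]distrC; apply: H.
rewrite ger0_norm ?subr_ge0 // ger0_norm; last first.
  by rewrite subr_ge0; apply: ge0_ler_powR => //; rewrite ?nnegrE // (le_trans _ q1).
by rewrite lerBrDr key1.
Qed.

Lemma wabq (R : realType) (q a b x : R) :
  powR (wab a b x) q = wab (q * a) (q * b) x.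
Proof.
by rewrite /wab powRM ?powR_ge0 // -!powRrM [a * q]mulrC [b * q]mulrC.
Qed.

Lemma pw (R : realType) (q a b : R) (f : R -> R) h z x :
  1 <= q -> 0 <= h -> (forall y : R, -1 <= y <= 1 -> 0 <= f y) ->
  powR `|wab a b z * Delta1 f h x| q <=
  powR `|wab (q * a) (q * b) z * Delta1 (fun y => powR (f y) q) h x| 1.
Proof.
move=> q1 h0 fge0; rewrite powRr1 //.
rewrite /Delta1; case: ifP => [/andP[h1 h2]|_]; last first.
  rewrite !mulr0 normr0 powR0 //; apply/eqP => q0; move: q1; rewrite q0; lra.
have w0 (c d : R) : 0 <= wab c d z by rewrite /wab mulr_ge0 ?powR_ge0.
rewrite (normrM (wab a b z)) (normrM (wab (q * a) (q * b) z)) (ger0_norm (w0 a b)) (ger0_norm (w0 _ _)).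
rewrite powRM // wabq.
apply: ler_wpM2l; first exact: w0.
apply: key2 => //; apply: fge0; apply/andP; split; lra.
Qed.

Lemma int_le (R : realType) (S : set R) (g1 g2 : R -> \bar R) :
  (forall x, S x -> (0 <= g1 x)%E) -> (forall x, S x -> (g1 x <= g2 x)%E) ->
  (\int[@lebesgue_measure R]_(x in S) g1 x <= \int[@lebesgue_measure R]_(x in S) g2 x)%E.
Proof.
move=> g10 g12.
have g20 : forall x, S x -> (0 <= g2 x)%E.
  by move=> x Sx; apply: le_trans (g12 _ Sx); exact: g10.
rewrite !ge0_integralE //.
apply: le_ereal_sup => y [h hle <-]; exists h => //= x.
apply: le_trans (hle x) _.
rewrite /patch; case: ifP => // /set_mem Sx; exact: g12.
Qed.

Lemma Ln_le (R : realType) (q : R) (S : set R) (g1 g2 : R -> R) :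
  1 <= q -> (forall x, S x -> powR `|g1 x| q <= powR `|g2 x| 1) ->
  (Lnorm_on q S g1 <= (Lnorm_on 1 S g2) `^ q^-1)%E.
Proof.
move=> q1 H; rewrite /Lnorm_on invr1.
have i0 (r : R) (g : R -> R) : (0 <= \int[@lebesgue_measure R]_(x in S) (powR `|g x| r)%:E)%E.
  by apply: integral_ge0 => x _; rewrite lee_fin powR_ge0.
rewrite poweRe1 //.
apply: gt0_ler_poweR.
- by rewrite invr_ge0 (le_trans _ q1).
- by rewrite in_itv /= i0 leey.
- by rewrite in_itv /= i0 leey.
apply: int_le => x Sx; first by rewrite lee_fin powR_ge0.
by rewrite lee_fin H.
Qed.

Lemma sup_le (R : realType) (r : R) (P1 P2 : R -> Prop) (F G : R -> \bar R) :
  0 <= r -> (forall h, P1 h -> P2 h -> (F h <= (G h) `^ r)%E) ->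
  (forall h, (0 <= G h)%E) ->
  (ereal_sup [set y | exists h, [/\ P1 h, P2 h & y = F h]] <=
   (ereal_sup [set y | exists h, [/\ P1 h, P2 h & y = G h]]) `^ r)%E.
Proof.
move=> r0 H G0; apply: ge_ereal_sup => y [h [p1 p2 ->]].
apply: le_trans (H h p1 p2) _.
have Gs : (G h <= ereal_sup [set y | exists h, [/\ P1 h, P2 h & y = G h]])%E.
  by apply: ereal_sup_ubound; exists h.
apply: gt0_ler_poweR => //; rewrite in_itv /= leey ?G0 //.
by rewrite (le_trans (G0 h)).
Qed.

Lemma three (R : realType) (y : \bar R) : (0 <= y)%E -> (y + y + y = 3%:E * y)%E.
Proof.
case: y => [r| |] //= r0.
  by rewrite -!EFinD -EFinM; congr EFin; lra.
by rewrite mulry gtr0_sg // mul1e.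
Qed.

Lemma phi_ge0 (R : realType) (x:R) : 0 <= phi x.
Proof. by rewrite /phi sqrtr_ge0. Qed.

Section Main.
Variables (R : realType) (q a b : R) (f : R -> R) (delta : R).
Hypotheses (q1 : 1 <= q) (fge0 : forall y : R, -1 <= y <= 1 -> 0 <= f y).

Let fq := fun x => powR (f x) q.

Lemma O1 : (Omega_phi f delta (wab a b) q <=
  (Omega_phi fq delta (wab (q * a) (q * b)) 1) `^ q^-1)%E.
Proof.
rewrite /Omega_phi.
apply: (@sup_le R q^-1 (fun h => 0 < h) (fun h => h <= delta)
  (fun h => Lnorm_on q `[-1 + 2 * h ^+ 2, 1 - 2 * h ^+ 2]
     (fun x => wab a b x * Delta1 f (h * phi x) x))
  (fun h => Lnorm_on 1 `[-1 + 2 * h ^+ 2, 1 - 2 * h ^+ 2]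
     (fun x => wab (q * a) (q * b) x * Delta1 fq (h * phi x) x))).
- by rewrite invr_ge0 (le_trans _ q1).
- move=> h h0 _; apply: Ln_le => // x _; apply: pw => //.
  by apply: mulr_ge0; [exact: (ltW h0)|exact: phi_ge0].
- by move=> h; exact: poweR_ge0.
Qed.

Lemma O2 : (fOmega_phi f delta (wab a b) q <=
  (fOmega_phi fq delta (wab (q * a) (q * b)) 1) `^ q^-1)%E.
Proof.
rewrite /fOmega_phi.
apply: (@sup_le R q^-1 (fun h => 0 < h) (fun h => h <= 2 * delta ^+ 2)
  (fun h => Lnorm_on q `[-1, -1 + 2 * delta ^+ 2]
     (fun x => wab a b x * fDelta1 f h x))
  (fun h => Lnorm_on 1 `[-1, -1 + 2 * delta ^+ 2]
     (fun x => wab (q * a) (q * b) x * fDelta1 fq h x))).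
- by rewrite invr_ge0 (le_trans _ q1).
- move=> h h0 _; apply: Ln_le => // x _; rewrite /fDelta1 /bDelta1; exact: (@pw R q a b f h x _ q1 (ltW h0) fge0).
- by move=> h; exact: poweR_ge0.
Qed.

Lemma O3 : (bOmega_phi f delta (wab a b) q <=
  (bOmega_phi fq delta (wab (q * a) (q * b)) 1) `^ q^-1)%E.
Proof.
rewrite /bOmega_phi.
apply: (@sup_le R q^-1 (fun h => 0 < h) (fun h => h <= 2 * delta ^+ 2)
  (fun h => Lnorm_on q `[1 - 2 * delta ^+ 2, 1]
     (fun x => wab a b x * bDelta1 f h x))
  (fun h => Lnorm_on 1 `[1 - 2 * delta ^+ 2, 1]
     (fun x => wab (q * a) (q * b) x * bDelta1 fq h x))).
- by rewrite invr_ge0 (le_trans _ q1).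
- move=> h h0 _; apply: Ln_le => // x _; rewrite /fDelta1 /bDelta1; exact: (@pw R q a b f h x _ q1 (ltW h0) fge0).
- by move=> h; exact: poweR_ge0.
Qed.
End Main.

Theorem lemma4p3 (R : realType) (q a b : R) :
  1 < q ->
  exists c : R, 0 < c /\
    forall f : R -> R,
      measurable_fun `[(-1 : R), 1] f ->
      (forall x : R, -1 <= x <= 1 -> 0 <= f x) ->
      (Lnorm_on q `[(-1)%R, 1%R] (fun x => (wab a b x * f x)%R) < +oo)%E ->
      forall delta : R, 0 < delta ->
        (omega_phi f delta (wab a b) q <=
         c%:E * (omega_phi (fun x => powR (f x) q) delta (wab (q * a) (q * b)) 1)
                  `^ q^-1)%E.
Proof.
move=> q1; exists 3; split => // f _ fge0 _ delta d0.
have q1' : 1 <= q by exact: ltW.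
set fq := (fun x => powR (f x) q).
set X1 := Omega_phi fq delta (wab (q * a) (q * b)) 1.
set X2 := fOmega_phi fq delta (wab (q * a) (q * b)) 1.
set X3 := bOmega_phi fq delta (wab (q * a) (q * b)) 1.
have X10 : (0 <= X1)%E.
  rewrite /X1 /Omega_phi.
  apply: (@le_trans _ _ (Lnorm_on 1 `[-1 + 2 * delta ^+ 2, 1 - 2 * delta ^+ 2]
     (fun x => wab (q * a) (q * b) x * Delta1 fq (delta * phi x) x))%R); first exact: poweR_ge0.
  apply: ereal_sup_ubound; exists delta; split => //.
have dd : 0 < 2 * delta ^+ 2 by rewrite mulr_gt0 // exprn_gt0.
have X20 : (0 <= X2)%E.
  rewrite /X2 /fOmega_phi.
  apply: (@le_trans _ _ (Lnorm_on 1 `[-1, -1 + 2 * delta ^+ 2]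
     (fun x => wab (q * a) (q * b) x * fDelta1 fq (2 * delta ^+ 2) x))%R); first exact: poweR_ge0.
  apply: ereal_sup_ubound; exists (2 * delta ^+ 2); split => //.
have X30 : (0 <= X3)%E.
  rewrite /X3 /bOmega_phi.
  apply: (@le_trans _ _ (Lnorm_on 1 `[1 - 2 * delta ^+ 2, 1]
     (fun x => wab (q * a) (q * b) x * bDelta1 fq (2 * delta ^+ 2) x))%R); first exact: poweR_ge0.
  apply: ereal_sup_ubound; exists (2 * delta ^+ 2); split => //.
rewrite [omega_phi f _ _ _]/omega_phi.
rewrite [omega_phi fq _ _ _]/omega_phi -/X1 -/X2 -/X3.
have H1 : (Omega_phi f delta (wab a b) q <= X1 `^ q^-1)%E := @O1 R q a b f delta q1' fge0.
have H2 : (fOmega_phi f delta (wab a b) q <= X2 `^ q^-1)%E := @O2 R q a b f delta q1' fge0.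
have H3 : (bOmega_phi f delta (wab a b) q <= X3 `^ q^-1)%E := @O3 R q a b f delta q1' fge0.
clearbody X1 X2 X3.
set Y := (X1 + X2 + X3)%E.
have Y0 : (0 <= Y)%E by rewrite /Y !adde_ge0.
have qi : 0 <= q^-1 by rewrite invr_ge0 (le_trans _ q1').
have le_Y (X : \bar R) : (0 <= X)%E -> (X <= Y)%E -> (X `^ q^-1 <= Y `^ q^-1)%E.
  move=> X0 XY; apply: gt0_ler_poweR => //.
  - by rewrite in_itv /= X0 leey.
  - by rewrite in_itv /= Y0 leey.
rewrite -(@three R _ (poweR_ge0 Y q^-1)).
apply: leeD; first apply: leeD.
- apply: le_trans H1 _; apply: le_Y => //.
  exact: le_trans (leeDl X1 X20) (leeDl _ X30).
- apply: le_trans H2 _; apply: le_Y => //.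
  exact: le_trans (leeDr X2 X10) (leeDl _ X30).
- apply: le_trans H3 _; apply: le_Y => //.
  rewrite /Y; apply: leeDr; exact: adde_ge0.
Qed.
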